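(* Let $K$ be a division ring, $R=K[t;\sigma,\delta]$, and let $f,f',g\in R$ be such that $h+Rf'\mapsto hg+Rf$ is a well-defined isomorphism of left $R$-modules $R/Rf'\to R/Rf$. Then $g(x)\neq0$ for every $x\in V(f)$, and $V(f')=\{\phi_g(x)\mid x\in V(f)\}$.
   Context: $K$ is a division ring, $\sigma$ a ring endomorphism of $K$, $\delta$ a $\sigma$-derivation ($\delta$ additive, $\delta(ab)=\sigma(a)\delta(b)+\delta(a)b$); $R=K[t;\sigma,\delta]$ is the Ore extension with $ta=\sigma(a)t+\delta(a)$. For $h\in R$ and $x\in K$, $h(x)$ is the unique element of $K$ with $h-h(x)\in R(t-x)$, and $V(h)=\{x\in K\mid h(x)=0\}$ is the set of right roots of $h$. For $0\ne y\in K$, $x^y:=\sigma(y)xy^{-1}+\delta(y)y^{-1}$, and for $x\notin V(g)$, $\phi_g(x):=x^{g(x)}$. *)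

(* Defs.v *)
From HB Require Import structures.
From mathcomp Require Import all_boot all_order all_algebra.
From Stdlib Require Import ClassicalEpsilon.
Set Implicit Arguments. Unset Strict Implicit. Unset Printing Implicit Defensive.
Import GRing.Theory.
Local Open Scope ring_scope.

(* Elements of the Ore extension R = K[t; sigma, delta] are represented by
   their (left) coefficient sequences  sum_i a_i t^i, i.e. by {poly K}
   (only the additive structure of {poly K} is used; the Ore product is
   [omul] below).  The polynomial 'X represents t, c%:P represents c. *)

Section Ore.
Variables (K : unitRingType) (sigma : {rmorphism K -> K}) (delta : {additive K -> K}).

(* left multiplication by t:  t * (a t^i) = sigma(a) t^(i+1) + delta(a) t^i *)
Definition tmul (p : {poly K}) : {poly K} :=
  map_poly sigma p * 'X + map_poly delta p.

Definition omul (p q : {poly K}) : {poly K} :=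
  \sum_(i < size p) (p`_i)%:P * iter (nat_of_ord i) tmul q.

Definition in_lideal (f h : {poly K}) : Prop := exists q, h = omul q f.

(* h(x): the unique c in K with h - c in R (t - x) *)
Definition ore_eval (h : {poly K}) (x : K) : K :=
  epsilon (inhabits 0) (fun c : K => in_lideal ('X - x%:P) (h - c%:P)).

Definition rroots (h : {poly K}) : K -> Prop := fun x => ore_eval h x = 0.

Definition oconj (x y : K) : K := sigma y * x * y^-1 + delta y * y^-1.

Definition phi (g : {poly K}) (x : K) : K := oconj x (ore_eval g x).
End Ore.

(* Main.v *)
Require Import Defs.
From HB Require Import structures.
From mathcomp Require Import all_boot all_order all_algebra.
From Stdlib Require Import ClassicalEpsilon.
Import GRing.Theory.
Local Open Scope ring_scope.

Section Aux.
Variables (K : unitRingType) (sigma : {rmorphism K -> K}) (delta : {additive K -> K}).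
Local Notation T := (tmul sigma delta).
Local Notation om := (omul sigma delta).

Lemma coefT (p : {poly K}) j :
  (T p)`_j = (if j == 0%N then 0 else sigma p`_j.-1) + delta p`_j.
Proof. by rewrite /tmul coefD coefMX !coef_map; case: j. Qed.

Lemma T_add (p q : {poly K}) : T (p + q) = T p + T q.
Proof.
apply/polyP=> j; rewrite coefD !coefT !coefD !raddfD /=.
case: j => [|j] /=; rewrite ?add0r; last first.
  by rewrite addrACA.
by [].
Qed.

Lemma T_opp (p : {poly K}) : T (- p) = - T p.
Proof.
apply/polyP=> j; rewrite coefN !coefT !coefN !raddfN /=.
case: j => [|j] /=; rewrite ?oppr0 ?add0r //; by rewrite opprD.
Qed.

Lemma T0 : T 0 = 0.
Proof. by apply/(addrI (T 0)); rewrite -T_add !addr0. Qed.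

Lemma iterT_add i (p q : {poly K}) : iter i T (p + q) = iter i T p + iter i T q.
Proof. by elim: i => //= i ->; rewrite T_add. Qed.

Lemma iterT_opp i (p : {poly K}) : iter i T (- p) = - iter i T p.
Proof. by elim: i => //= i ->; rewrite T_opp. Qed.

Definition omN (p q : {poly K}) n := \sum_(i < n) p`_i *: iter i T q.

Lemma omE (p q : {poly K}) n : (size p <= n)%N -> om p q = omN p q n.
Proof.
move=> hn; rewrite /omul /omN.
under eq_bigr do rewrite mul_polyC.
rewrite (big_ord_widen n (fun i => p`_i *: iter i T q) hn) /=.
rewrite big_mkcond /=; apply: eq_bigr => i _; case: ifP => // /negbT.
by rewrite -leqNgt => /leq_sizeP ->; rewrite // scale0r.
Qed.

Lemma om_addl (p p' q : {poly K}) : om (p + p') q = om p q + om p' q.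
Proof.
set n := maxn (size p) (size p').
rewrite (omE _ _ n); last by rewrite (leq_trans (size_polyD _ _)).
rewrite (omE p _ n) ?leq_maxl // (omE p' _ n) ?leq_maxr //.
by rewrite /omN -big_split; apply: eq_bigr => i _; rewrite coefD scalerDl.
Qed.

Lemma om_oppl (p q : {poly K}) : om (- p) q = - om p q.
Proof.
rewrite (omE _ _ (size p)) ?size_polyN // (omE p _ (size p)) //.
by rewrite /omN -sumrN; apply: eq_bigr => i _; rewrite coefN scaleNr.
Qed.

Lemma om_subl (p p' q : {poly K}) : om (p - p') q = om p q - om p' q.
Proof. by rewrite om_addl om_oppl. Qed.

Lemma om_addr (p q q' : {poly K}) : om p (q + q') = om p q + om p q'.
Proof.
rewrite /omul -big_split; apply: eq_bigr => i _.
by rewrite iterT_add mulrDr.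
Qed.

Lemma om_oppr (p q : {poly K}) : om p (- q) = - om p q.
Proof.
rewrite /omul -sumrN; apply: eq_bigr => i _.
by rewrite iterT_opp mulrN.
Qed.

Lemma om_subr (p q q' : {poly K}) : om p (q - q') = om p q - om p q'.
Proof. by rewrite om_addr om_oppr. Qed.

Lemma om0l (q : {poly K}) : om 0 q = 0.
Proof. by rewrite /omul size_poly0 big_ord0. Qed.

Lemma omCl c (q : {poly K}) : om c%:P q = c *: q.
Proof.
rewrite (omE _ _ 1) ?size_polyC ?leq_b1 //.
by rewrite /omN big_ord1 coefC.
Qed.

Lemma om_scalel c (p q : {poly K}) : om (c *: p) q = c *: om p q.
Proof.
rewrite (omE _ _ (size p)); last by rewrite size_scale_leq.
rewrite (omE p _ (size p)) // /omN scaler_sumr; apply: eq_bigr => i _.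
by rewrite coefZ scalerA.
Qed.

Lemma om_mulX (p q : {poly K}) : om (p * 'X) q = om p (T q).
Proof.
rewrite (omE _ _ (size p).+1); last first.
  by rewrite (leq_trans (size_mul_leq _ _)) // size_polyX addn2.
rewrite (omE p _ (size p)) // /omN big_ord_recl coefMX /= scale0r add0r.
apply: eq_bigr => i _; rewrite coefMX /= /bump /=. 
by rewrite -iterSr.
Qed.
End Aux.

Section Aux2.
Variables (K : unitRingType) (sigma : {rmorphism K -> K}) (delta : {additive K -> K}).
Hypothesis delta_mul : forall a b : K, delta (a * b) = sigma a * delta b + delta a * b.
Local Notation T := (tmul sigma delta).
Local Notation om := (omul sigma delta).

Lemma delta1 : delta 1 = 0.
Proof.
have := delta_mul 1 1; rewrite rmorph1 !mul1r mulr1 => h.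
by apply: (addrI (delta 1)); rewrite addr0 -h.
Qed.

Lemma T_scale c (q : {poly K}) : T (c *: q) = sigma c *: T q + delta c *: q.
Proof.
apply/polyP=> j; rewrite coefT !coefD !coefZ coefT delta_mul.
case: j => [|j] /=; first by rewrite !add0r.
by rewrite rmorphM mulrDr addrA.
Qed.

Lemma T_mulX (p : {poly K}) : T (p * 'X) = T p * 'X.
Proof.
apply/polyP=> j; rewrite coefT !coefMX coefT.
case: j => [|[|j]] /=; by rewrite ?raddf0 ?add0r.
Qed.

Lemma T_C c : T c%:P = (sigma c)%:P * 'X + (delta c)%:P.
Proof. by rewrite /tmul !map_polyC. Qed.

Lemma om_T (p q : {poly K}) : om (T p) q = T (om p q).
Proof.
elim/poly_ind: p q => [|p c IH] q.
  by rewrite T0 om0l T0.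
rewrite T_add T_mulX T_C !om_addl !om_mulX !omCl IH.
by rewrite T_add T_scale addrA.
Qed.

Lemma om_assoc (p q r : {poly K}) : om (om p q) r = om p (om q r).
Proof.
elim/poly_ind: p q => [|p c IH] q.
  by rewrite !om0l.
rewrite !om_addl !om_mulX !omCl om_scalel IH om_T.
by [].
Qed.

Lemma iterT_mulX i (q : {poly K}) : iter i T (q * 'X) = iter i T q * 'X.
Proof. by elim: i => //= i ->; rewrite T_mulX. Qed.

Lemma om_mulXr (p q : {poly K}) : om p (q * 'X) = om p q * 'X.
Proof.
rewrite /omul mulr_suml; apply: eq_bigr => i _.
by rewrite iterT_mulX mulrA.
Qed.

Lemma om_p1 (p : {poly K}) : om p 1 = p.
Proof.
elim/poly_ind: p => [|p c IH]; first by rewrite om0l.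
rewrite om_addl om_mulX omCl.
have -> : T 1 = 1 * 'X.
  by rewrite -polyC1 T_C rmorph1 delta1 addr0.
by rewrite om_mulXr IH -alg_polyC.
Qed.

Lemma om_1p (p : {poly K}) : om 1 p = p.
Proof. by rewrite -polyC1 omCl scale1r. Qed.
End Aux2.

Section Eval.
Variables (K : unitRingType) (sigma : {rmorphism K -> K}) (delta : {additive K -> K}).
Hypothesis delta_mul : forall a b : K, delta (a * b) = sigma a * delta b + delta a * b.
Local Notation T := (tmul sigma delta).
Local Notation om := (omul sigma delta).
Variable x : K.
Local Notation P k := (iter k T ('X - x%:P)).

Lemma P_prop k : (size (P k) <= k.+2)%N /\ (P k)`_k.+1 = 1.
Proof.
elim: k => [|k [IH1 IH2]] /=.
  by rewrite size_XsubC coefB coefX coefC /= subr0.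
have Hz : forall j, (k.+2 <= j)%N -> (P k)`_j = 0 by apply/leq_sizeP.
split.
  apply/leq_sizeP => j hj; rewrite coefT.
  case: j hj => [|j] //= hj; rewrite !Hz ?raddf0 ?addr0 //; exact: ltnW.
by rewrite coefT /= IH2 rmorph1 Hz ?raddf0 ?addr0.
Qed.

Lemma om_Xn n (r : {poly K}) : om 'X^n r = iter n T r.
Proof.
elim: n r => [|n IH] r; first by rewrite expr0 om_1p.
by rewrite exprSr om_mulX IH iterSr.
Qed.

Lemma coef_om (q : {poly K}) n : size q = n.+1 -> (om q ('X - x%:P))`_n.+1 = q`_n.
Proof.
move=> hs; rewrite (@omE K sigma delta _ _ n.+1) ?hs // /omN coef_sum big_ord_recr /=.
rewrite big1 ?add0r; last first.
  move=> i _; rewrite coefZ.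
  have [h1 _] := P_prop i.
  by move/leq_sizeP: h1 => ->; rewrite ?mulr0 // ltnS.
by rewrite coefZ (proj2 (P_prop n)) mulr1.
Qed.

Lemma om_XsubC_const (q : {poly K}) c : om q ('X - x%:P) = c%:P -> q = 0.
Proof.
move=> h; apply/eqP; apply: contraT => qn0.
have hs : size q = (size q).-1.+1 by rewrite prednK // lt0n size_poly_eq0.
have := coef_om _ _ hs; rewrite h coefC /= => /esym /eqP.
by rewrite -lead_coefE lead_coef_eq0 (negbTE qn0).
Qed.

Lemma division (h : {poly K}) : exists q c, h = om q ('X - x%:P) + c%:P.
Proof.
suff: forall n (h : {poly K}), (size h <= n.+1)%N -> exists q c, h = om q ('X - x%:P) + c%:P.
  move=> H; exact: (H _ h (leqnSn _)).
elim=> [|n IH] {}h hs.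
  by exists 0, h`_0; rewrite om0l add0r -size1_polyC.
set a := h`_n.+1.
have [h1 h2] := P_prop n.
have hs' : (size (h - a *: P n)%R <= n.+1)%N.
  apply/leq_sizeP => j; rewrite leq_eqVlt => /orP [/eqP ej|hj].
    by rewrite -ej coefB coefZ h2 mulr1 subrr.
  rewrite coefB coefZ; move/leq_sizeP: hs => -> //.
  by move/leq_sizeP: h1 => ->; rewrite // mulr0 subrr.
have [q [c hq]] := IH _ hs'.
exists (q + a *: 'X^n), c.
by rewrite om_addl om_scalel om_Xn -addrAC -hq subrK.
Qed.

Lemma evalP (h : {poly K}) c :
  in_lideal sigma delta ('X - x%:P) (h - c%:P) -> ore_eval sigma delta h x = c.
Proof.
move=> [q hq].
have ex : exists c, in_lideal sigma delta ('X - x%:P) (h - c%:P) by exists c, q.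
have := epsilon_spec (inhabits 0) _ ex; rewrite -/(ore_eval sigma delta h x).
move=> [q0 hq0].
have e : om (q0 - q) ('X - x%:P) = (c - ore_eval sigma delta h x)%:P.
  by rewrite om_subl -hq0 -hq polyCB opprB addrC addrA subrK addrC.
have := om_XsubC_const _ _ e; move=> z; move: e; rewrite z om0l => /esym/eqP.
by rewrite polyC_eq0 subr_eq0 => /eqP.
Qed.

Lemma eval_spec (h : {poly K}) :
  in_lideal sigma delta ('X - x%:P) (h - (ore_eval sigma delta h x)%:P).
Proof.
have [q [c hq]] := division h.
have ex : exists c, in_lideal sigma delta ('X - x%:P) (h - c%:P).
  by exists c, q; rewrite hq addrK.
exact: epsilon_spec (inhabits 0) _ ex.
Qed.
End Eval.

Section Main.
Variables (K : unitRingType) (sigma : {rmorphism K -> K}) (delta : {additive K -> K}).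
Hypothesis delta_mul : forall a b : K, delta (a * b) = sigma a * delta b + delta a * b.
Local Notation T := (tmul sigma delta).
Local Notation om := (omul sigma delta).
Local Notation I := (in_lideal sigma delta).

Lemma lid_add f a b : I f a -> I f b -> I f (a + b).
Proof. by move=> [q ->] [q' ->]; exists (q + q'); rewrite om_addl. Qed.

Lemma lid_opp f a : I f a -> I f (- a).
Proof. by move=> [q ->]; exists (- q); rewrite om_oppl. Qed.

Lemma lid_sub f a b : I f a -> I f b -> I f (a - b).
Proof. by move=> ha hb; apply: lid_add ha (lid_opp _ _ hb). Qed.

Lemma lid_mul f h a : I f a -> I f (om h a).
Proof. by move=> [q ->]; exists (om h q); rewrite om_assoc. Qed.

Lemma lid_trans f g a : I f a -> I g f -> I g a.
Proof. by move=> [q ->] [q' ->]; exists (om q q'); rewrite om_assoc. Qed.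

Lemma lid_self f : I f f.
Proof. by exists 1; rewrite om_1p. Qed.

Lemma rootsP f x : rroots sigma delta f x <-> I ('X - x%:P) f.
Proof.
split=> [e|h].
  by have := eval_spec K sigma delta x f; rewrite /rroots in e; rewrite e polyC0 subr0.
by apply: evalP => //; rewrite polyC0 subr0.
Qed.

Lemma one_eval x : ore_eval sigma delta 1 x = 1.
Proof. by apply: evalP => //; exists 0; rewrite polyC1 subrr om0l. Qed.

Lemma conj_lemma x c : c \is a GRing.unit ->
  om ('X - (oconj sigma delta x c)%:P) c%:P = om (sigma c)%:P ('X - x%:P).
Proof.
move=> uc; rewrite omCl (@omE K sigma delta _ _ 2); last by rewrite size_XsubC.
rewrite /omN big_ord_recr big_ord1 /= T_C.
rewrite !coefB !coefX !coefC /= sub0r subr0 scale1r.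
apply/polyP=> j; rewrite !coefD !coefZ coefMX !coefC !coefB coefX !coefC.
have z : forall a : K, a * 0 = 0 := fun a => mulr0 a.
case: j => [|[|j]] /=.
- rewrite add0r sub0r mulrN /oconj mulNr mulrDl -!mulrA mulVr //.
  by rewrite !mulr1 opprD subrK.
- by rewrite !z oppr0 add0r !addr0 mulr1.
- by rewrite !z oppr0 !addr0 ?subr0 ?oppr0 ?addr0 z.
Qed.

Lemma eval_mul_ne0 (h g : {poly K}) x :
  ore_eval sigma delta g x \is a GRing.unit ->
  ore_eval sigma delta (om h g) x =
  ore_eval sigma delta h (oconj sigma delta x (ore_eval sigma delta g x)) *
  ore_eval sigma delta g x.
Proof.
set c := ore_eval sigma delta g x => uc.
set y := oconj sigma delta x c.
set d := ore_eval sigma delta h y.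
have [q hq] := eval_spec K sigma delta x g.
have [q' hq'] := eval_spec K sigma delta y h.
have eg : g = om q ('X - x%:P) + c%:P by rewrite -hq subrK.
have eh : om h c%:P = om (om q' ('X - y%:P)) c%:P + (d * c)%:P.
  by rewrite -hq' om_subl omCl -mul_polyC -polyCM subrK.
apply: evalP => //; exists (om h q + om q' (sigma c)%:P).
rewrite {1}eg om_addr eh om_addl !om_assoc // /y conj_lemma //.
by rewrite addrA addrK.
Qed.

Lemma eval_mul_0 (h g : {poly K}) x :
  ore_eval sigma delta g x = 0 -> ore_eval sigma delta (om h g) x = 0.
Proof. by move/rootsP=> hg; apply/rootsP; apply: lid_mul. Qed.

Lemma oconj_inv y d : d \is a GRing.unit ->
  oconj sigma delta (oconj sigma delta y d) d^-1 = y.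
Proof.
move=> ud; rewrite /oconj invrK mulrDr mulrDl.
rewrite -!mulrA mulVr // mulr1 !mulrA -rmorphM mulVr // rmorph1 mul1r.
by rewrite mulr1 -addrA -delta_mul mulVr // (@delta1 K sigma delta delta_mul) addr0.
Qed.
End Main.

Theorem corollary1p17
  (K : unitRingType)
  (Kdiv : forall a : K, a != 0 -> a \is a GRing.unit)
  (sigma : {rmorphism K -> K}) (delta : {additive K -> K})
  (delta_mul : forall a b : K, delta (a * b) = sigma a * delta b + delta a * b)
  (f f' g : {poly K})
  (* h + R f' |-> h g + R f is well defined *)
  (Hwd : forall h1 h2 : {poly K}, in_lideal sigma delta f' (h1 - h2) ->
           in_lideal sigma delta f (omul sigma delta h1 g - omul sigma delta h2 g))
  (* ... injective *)
  (Hinj : forall h1 h2 : {poly K},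
           in_lideal sigma delta f (omul sigma delta h1 g - omul sigma delta h2 g) ->
           in_lideal sigma delta f' (h1 - h2))
  (* ... surjective *)
  (Hsurj : forall k : {poly K}, exists h : {poly K},
           in_lideal sigma delta f (k - omul sigma delta h g)) :
  (forall x : K, rroots sigma delta f x -> ore_eval sigma delta g x != 0) /\
  (forall y : K, rroots sigma delta f' y <->
     exists2 x : K, rroots sigma delta f x & y = phi sigma delta g x).
Proof.
have Ladd := @lid_add K sigma delta.
have Lopp := @lid_opp K sigma delta.
have Lsub := @lid_sub K sigma delta.
have Lmul := @lid_mul K sigma delta delta_mul.
have Ltr := @lid_trans K sigma delta delta_mul.
have Lself := @lid_self K sigma delta.
have RP := @rootsP K sigma delta.
have E1 := @one_eval K sigma delta.
have Emul := @eval_mul_ne0 K sigma delta delta_mul.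
have Emul0 := @eval_mul_0 K sigma delta delta_mul.
have Cinv := @oconj_inv K sigma delta delta_mul.
have Oassoc := @om_assoc K sigma delta delta_mul.
have Op1 := @om_p1 K sigma delta delta_mul.
have O1p := @om_1p K sigma delta.
have Osubr := @om_subr K sigma delta.
have O0l := @om0l K sigma delta.
have one_ne0 : (1 : K) != 0 by apply: oner_neq0.
have part1 : forall x : K, rroots sigma delta f x -> ore_eval sigma delta g x != 0.
  move=> x /RP fx; apply/negP => /eqP gx.
  have [h hh] := Hsurj 1.
  have A := Ltr _ _ _ hh fx.
  have B := Lmul _ h _ ((proj1 (RP g x)) gx).
  have C := Ladd _ _ _ A B; rewrite subrK in C.
  have := E1 x; rewrite (proj2 (RP 1 x) C) => /esym/eqP.
  by rewrite (negbTE one_ne0).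
split=> // y; split.
- move=> /RP fy.
  have [g' hg'] := Hsurj 1.
  have A : in_lideal sigma delta f' (omul sigma delta g g' - 1).
    apply: Hinj.
    have := Lopp _ _ (Lmul _ g _ hg').
    by rewrite Osubr Op1 opprB O1p Oassoc.
  have B : in_lideal sigma delta f' (omul sigma delta f g').
    have := Hinj (omul sigma delta f g') 0; rewrite subr0; apply.
    rewrite O0l subr0 Oassoc.
    have := Lsub _ _ _ (Lself f) (Lmul _ f _ hg').
    by rewrite Osubr Op1 opprB addrC subrK.
  have A' := Ltr _ _ _ A fy.
  have e1 : ore_eval sigma delta (omul sigma delta g g') y = 1.
    by apply: evalP; rewrite polyC1.
  set d := ore_eval sigma delta g' y.
  have dn0 : d != 0.
    apply/negP => /eqP d0.
    by move: e1; rewrite Emul0 // => /esym/eqP; rewrite (negbTE one_ne0).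
  have ud := Kdiv _ dn0.
  rewrite Emul // -/d in e1.
  set x := oconj sigma delta y d in e1.
  exists x.
    have B' := Ltr _ _ _ B fy.
    have := proj2 (RP _ _) B'; rewrite /rroots Emul // -/d -/x => e2.
    by rewrite /rroots -[LHS](mulrK ud) e2 mul0r.
  rewrite /phi.
  have -> : ore_eval sigma delta g x = d^-1 by rewrite -[LHS](mulrK ud) e1 mul1r.
  by rewrite Cinv.
- move=> [x fx ->].
  have cn0 := part1 x fx.
  have uc := Kdiv _ cn0.
  have := Hwd f' 0; rewrite subr0 O0l subr0 => H.
  have H2 := H (Lself f').
  have H3 := Ltr _ _ _ H2 ((proj1 (RP f x)) fx).
  have := proj2 (RP _ _) H3; rewrite /rroots Emul // => e.
  by rewrite /rroots /phi -[LHS](mulrK uc) e mul0r.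
Qed.
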